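(* Let $(V,g)$ be a Euclidean vector space and $\mathfrak{g}\subseteq\mathfrak{so}(V)$ a Lie subalgebra such that the map $\varepsilon^{\perp}:\Lambda^3V\to\Lambda^1V\otimes\mathfrak{g}^{\perp}$, $\varepsilon^\perp(T)_X=(X\lrcorner T)_{\mathfrak{g}^{\perp}}$, is surjective. Then the representation $(\mathfrak{g},V)$ is irreducible.
   Context: $\Lambda^2V$ is identified with $\mathfrak{so}(V)$ via $F\mapsto g(F\cdot,\cdot)$; $\mathfrak{g}^\perp$ is the orthogonal complement of $\mathfrak{g}$ in $\Lambda^2V$, and $(\cdot)_{\mathfrak{g}^\perp}$ the orthogonal projection onto it. *)

(* Defs.v *)
(* V = R^n (row vectors 'rV[R]_n) with the standard inner
   product, over a real closed field R (e.g. the reals).  so(V) = skew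
   n x n matrices; Lambda^2 V is identified with so(V). *)
From HB Require Import structures.
From mathcomp Require Import all_boot all_order all_algebra.
Set Implicit Arguments. Unset Strict Implicit. Unset Printing Implicit Defensive.
Import Order.TTheory GRing.Theory Num.Theory.
Local Open Scope ring_scope.

Section Defs.
Variables (R : rcfType) (n : nat).

Definition skew (A : 'M[R]_n) : Prop := A^T = - A.

(* Frobenius inner product on matrices (proportional to the induced inner
   product on Lambda^2 V, so orthogonality is the same). *)
Definition frob (A B : 'M[R]_n) : R := \sum_(i < n) \sum_(j < n) A i j * B i j.

Definition lie_subalgebra (g : 'M[R]_n -> Prop) : Prop :=
  [/\ forall A, g A -> skew A,
      g 0,
      forall (a : R) A B, g A -> g B -> g (a *: A + B)
    & forall A B, g A -> g B -> g (A *m B - B *m A)].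

Definition gperp (g : 'M[R]_n -> Prop) (B : 'M[R]_n) : Prop :=
  skew B /\ forall A, g A -> frob A B = 0.

(* B is the orthogonal projection of M onto g^perp:
   B in g^perp and M - B in g (M = (M - B) + B, orthogonal decomposition). *)
Definition is_proj_gperp (g : 'M[R]_n -> Prop) (M B : 'M[R]_n) : Prop :=
  gperp g B /\ g (M - B).

(* Lambda^3 V : alternating trilinear forms, given by their values on the
   standard basis. *)
Definition alt3 (T : 'I_n -> 'I_n -> 'I_n -> R) : Prop :=
  (forall i j k, T i j k = - T j i k) /\ (forall i j k, T i j k = - T i k j).

Definition contr (T : 'I_n -> 'I_n -> 'I_n -> R) (i : 'I_n) : 'M[R]_n :=
  \matrix_(j, k) T i j k.

(* eps^perp : Lambda^3 V -> Lambda^1 V (x) g^perp is surjective.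
   An element of Lambda^1 V (x) g^perp = Hom(V, g^perp) is given by its values
   A i on the basis vectors e_i. *)
Definition eps_perp_surjective (g : 'M[R]_n -> Prop) : Prop :=
  forall A : 'I_n -> 'M[R]_n, (forall i, gperp g (A i)) ->
    exists T, alt3 T /\ forall i, is_proj_gperp g (contr T i) (A i).

(* subspace U (row space of U) of V invariant under g acting by v |-> A v *)
Definition g_invariant (g : 'M[R]_n -> Prop) (U : 'M[R]_n) : Prop :=
  forall A, g A -> (U *m A^T <= U)%MS.

(* (g, V) is irreducible: only the trivial invariant subspaces (V <> 0 is
   imposed separately) *)
Definition irreducible_rep (g : 'M[R]_n -> Prop) : Prop :=
  forall U : 'M[R]_n, g_invariant g U -> (U == (0 : 'M[R]_n))%MS \/ (U == (1%:M : 'M[R]_n))%MS.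

End Defs.

(* Main.v *)
Require Import Defs.
From HB Require Import structures.
From mathcomp Require Import all_boot all_order all_algebra.
Import Order.TTheory GRing.Theory Num.Theory.
Local Open Scope ring_scope.

Section Aux.
Variables (R : rcfType) (n : nat).

Lemma nz_row m (M : 'M[R]_(m,n)) : M != 0 -> exists i, row i M != 0.
Proof.
move=> HM; apply/existsP; apply: contraR HM; rewrite negb_exists => /forallP H.
apply/eqP/row_matrixP => i; rewrite row0; exact/eqP/negbNE/H.
Qed.

Lemma nz_ent (u : 'rV[R]_n) : u != 0 -> exists i, u 0 i != 0.
Proof.
move=> HM; apply/existsP; apply: contraR HM; rewrite negb_exists => /forallP H.
apply/eqP/rowP => i; rewrite mxE; exact/eqP/negbNE/H.
Qed.

Lemma sq_pos (u : 'rV[R]_n) : u != 0 -> 0 < \sum_i u 0 i * u 0 i.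
Proof.
move=> /nz_ent [i Hi]; rewrite (bigD1 i) //=.
apply: ltr_pwDl; first by rewrite -expr2 exprn_even_gt0 // Hi.
by apply: sumr_ge0 => j _; rewrite -expr2 sqr_ge0.
Qed.

Lemma bilE (x y : 'rV[R]_n) (M : 'M[R]_n) :
  (x *m M *m y^T) 0 0 = \sum_i \sum_j x 0 i * M i j * y 0 j.
Proof.
rewrite !mxE; under eq_bigr => j _ do rewrite !mxE big_distrl /=.
rewrite exchange_big /=; apply: eq_bigr => i _; apply: eq_bigr => j _.
by rewrite ?mxE.
Qed.

Lemma sqE (x : 'rV[R]_n) : (x *m x^T) 0 0 = \sum_i x 0 i * x 0 i.
Proof. by rewrite mxE; apply: eq_bigr => i _; rewrite mxE. Qed.

End Aux.
Arguments sqE {R n}.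
Arguments nz_row {R n m M}.
Arguments nz_ent {R n u}.
Arguments sq_pos {R n u}.
Arguments bilE {R n}.

Theorem lemma8p1 (R : rcfType) (n : nat) (g : 'M[R]_n -> Prop) :
  (0 < n)%N -> lie_subalgebra g -> eps_perp_surjective g -> irreducible_rep g.
Proof.
move=> n0 [gskew g0 glin gbr] Hsurj U Uinv.
case: (boolP (U == 0)%MS) => [|HU0]; first by left.
case: (boolP (U == 1%:M)%MS) => [|HU1]; first by right.
exfalso.
have U0 : U != 0.
  by apply: contra HU0 => /eqP->; rewrite !sub0mx.
have [i ui] := nz_row U0.
set u := row i U.
have hu : (u <= U)%MS := row_sub i U.
have rkU : (\rank U < n)%N.
  rewrite ltn_neqAle rank_leq_col andbT; apply: contra HU1 => Hr.
  by rewrite submx1 sub1mx.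
have K0 : kermx U^T != 0.
  by rewrite -mxrank_eq0 mxrank_ker mxrank_tr subn_eq0 -ltnNge.
have [k wk] := nz_row K0.
set w := row k (kermx U^T).
have hw : w *m U^T = 0 by rewrite /w -row_mul mulmx_ker row0.
have hw' : U *m w^T = 0 by rewrite -(trmxK U) -trmx_mul hw trmx0.
have uw : u *m w^T = 0 by case/submxP: hu => x ->; rewrite -mulmxA hw' mulmx0.
have phi : forall M, g M -> u *m M^T *m w^T = 0.
  move=> M /Uinv inv.
  have : (u *m M^T <= U)%MS by apply: submx_trans (submxMr _ hu) inv.
  by case/submxP => y ->; rewrite -mulmxA hw' mulmx0.
have phi' : forall M, g M -> (w *m M *m u^T) 0 0 = 0.
  move=> M gM; have E : (w *m M *m u^T) 0 0 = ((w *m M *m u^T)^T) 0 0.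
    by rewrite [RHS]mxE.
  by rewrite E !trmx_mul trmxK mulmxA phi // mxE.
set B := w^T *m u - u^T *m w.
have hB : forall a b, B a b = w 0 a * u 0 b - u 0 a * w 0 b.
  by move=> a b; rewrite !mxE !big_ord1 !mxE.
have gB : gperp g B.
  split.
    apply/matrixP => a b; rewrite [LHS]mxE [RHS]mxE !hB opprB.
    by rewrite (mulrC (w 0 b)) (mulrC (u 0 b)).
  move=> A gA.
  have -> : frob A B = (w *m A *m u^T) 0 0 - (u *m A *m w^T) 0 0.
    rewrite !bilE /frob -sumrB; apply: eq_bigr => a _; rewrite -sumrB.
    apply: eq_bigr => b _; rewrite hB mulrBr; congr (_ - _).
      by rewrite mulrCA mulrA.
    by rewrite mulrCA mulrA mulrAC.
  rewrite phi' // sub0r; suff -> : (u *m A *m w^T) 0 0 = 0 by rewrite oppr0.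
  have hs := gskew A gA; rewrite /Defs.skew in hs.
  have -> : A = - A^T by rewrite hs opprK.
  rewrite mulmxN mulNmx.
  rewrite mxE.
  rewrite phi //.
  by rewrite mxE oppr0.
have wu : w *m u^T = 0 by rewrite -(trmxK w) -trmx_mul uw trmx0.
have E1 : forall (X Y : 'M[R]_1), (X - Y) 0 0 = X 0 0 - Y 0 0.
  by move=> X Y; rewrite !mxE.
have E2 : forall (c : R) (X : 'M[R]_1), (c *: X) 0 0 = c * X 0 0.
  by move=> c X; rewrite mxE.
pose Am := fun a : 'I_n => u 0 a *: B.
have gAm : forall a, gperp g (Am a).
  move=> a; case: gB => sB fB; split.
    have EZ : forall c (M : 'M[R]_n) x y, (c *: M) x y = c * M x y.
      by move=> c M x y; rewrite mxE.
    apply/matrixP => x y; rewrite /Am [LHS]mxE [RHS]mxE !EZ !hB !mulrBr opprB.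
    by rewrite (mulrC (w 0 y)) (mulrC (u 0 y)).
  move=> A gA; rewrite /frob.
  under eq_bigr => x _ do under eq_bigr => y _ do rewrite mxE mulrCA.
  under eq_bigr => x _ do rewrite -mulr_sumr. rewrite -mulr_sumr.
  by have := fB A gA; rewrite /frob => ->; rewrite mulr0.
have [T [[alt1 alt2] HT]] := Hsurj Am gAm.
have hC : forall a, (w *m contr T a *m u^T) 0 0 = u 0 a * (w *m B *m u^T) 0 0.
  move=> a; case: (HT a) => _ gG; have := phi' _ gG.
  rewrite mulmxBr mulmxBl E1 /Am -scalemxAr -scalemxAl E2 => /eqP.
  by rewrite subr_eq0 => /eqP.
have hWB : (w *m B *m u^T) 0 0 =
    (\sum_i w 0 i * w 0 i) * (\sum_i u 0 i * u 0 i).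
  rewrite /B mulmxBr mulmxBl (mulmxA w u^T) wu !mul0mx subr0.
  have -> : w *m (w^T *m u) *m u^T = (w *m w^T) *m (u *m u^T) by rewrite !mulmxA.
  by rewrite [LHS]mxE big_ord1 !sqE.

pose S := \sum_a u 0 a * (w *m contr T a *m u^T) 0 0.
have hS1 : S = (\sum_i u 0 i * u 0 i) *
    ((\sum_i w 0 i * w 0 i) * (\sum_i u 0 i * u 0 i)).
  rewrite /S; under eq_bigr => a _ do rewrite hC mulrA.
  by rewrite -mulr_suml hWB.
pose F := fun a b c => u 0 a * (w 0 b * T a b c * u 0 c).
have E3 : S = \sum_a \sum_b \sum_c F a b c.
  rewrite /S; apply: eq_bigr => a _; rewrite bilE mulr_sumr.
  apply: eq_bigr => b _; rewrite mulr_sumr; apply: eq_bigr => c _.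
  by rewrite /contr mxE.
have comm3 : forall x y z : R, x * (y * z) = z * (y * x).
  by move=> x y z; rewrite mulrC [y * z]mulrC mulrA.
have FF : forall a b c, F a b c + F c b a = 0.
  move=> a b c; rewrite /F (alt1 a b c) (alt2 b a c) (alt1 b c a) !opprK.
  by rewrite mulrN mulNr mulrN comm3 addNr.
have Ex : \sum_a \sum_b \sum_c F a b c = \sum_a \sum_b \sum_c F c b a.
  rewrite exchange_big /=; under eq_bigr => b _ do rewrite exchange_big /=.
  by rewrite exchange_big /=.
have S0 : S + S = 0.
  rewrite {1}E3 E3 {2}Ex -big_split /=; apply: big1 => a _.
  rewrite -big_split /=; apply: big1 => b _.
  rewrite -big_split /=; apply: big1 => c _.
  by rewrite FF.
have : 0 < S.
  rewrite hS1; apply: mulr_gt0; first exact: sq_pos.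
  by apply: mulr_gt0; apply: sq_pos.
by rewrite -(pmulrn_lgt0 _ (isT : (0 < 2)%N)) mulr2n S0 ltxx.
Qed.
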